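(* Let $\mathcal{G}\mathsf{L}$ be any of $\mathcal{G}\mathsf{N4}$, $\mathcal{G}\mathsf{CN4K}$, $\mathcal{G}\mathsf{CN4K}^\pm$, $\mathcal{G}\mathsf{CN4K}^\curlyvee$, $\mathcal{G}\mathsf{CN4K}^{\Join}$, $\mathcal{G}\mathsf{CN4K}^1$. The cut rule (from $\Gamma\Rightarrow\phi$ and $\phi,\Delta\Rightarrow\chi$ infer $\Gamma,\Delta\Rightarrow\chi$) is admissible in $\mathcal{G}\mathsf{L}$: if both premises are provable in $\mathcal{G}\mathsf{L}$, so is the conclusion.
   Context: Fix a countable set $\mathsf{Prop}$ of propositional variables. The language $\mathcal{L}$ is given by the grammar $\phi::=p\mid{\sim}\phi\mid(\phi\wedge\phi)\mid(\phi\vee\phi)\mid(\phi\to\phi)\mid\Box\phi\mid\Diamond\phi$ with $p\in\mathsf{Prop}$ (for $\mathcal{G}\mathsf{N4}$ only modality-free formulas are used). A sequent is $\Gamma\Rightarrow\phi$ with $\Gamma$ a finite multiset of formulas and $\phi$ a single formula. $\Gamma^\Box=\{\phi\mid\Box\phi\in\Gamma\}$, $\Gamma^\Diamond_\sim=\{{\sim}\phi\mid{\sim}\Diamond\phi\in\Gamma\}$ (multisets). Rules are written premise(s) / conclusion. Rules of $\mathcal{G}\mathsf{N4}$: axioms $p,\Gamma\Rightarrow p$ and ${\sim}p,\Gamma\Rightarrow{\sim}p$ ($p\in\mathsf{Prop}$); ${\sim}{\sim}_l$: $\phi,\Gamma\Rightarrow\psi$ / ${\sim}{\sim}\phi,\Gamma\Rightarrow\psi$;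 ${\sim}{\sim}_r$: $\Gamma\Rightarrow\phi$ / $\Gamma\Rightarrow{\sim}{\sim}\phi$; $\wedge_l$: $\phi,\chi,\Gamma\Rightarrow\psi$ / $\phi\wedge\chi,\Gamma\Rightarrow\psi$; $\wedge_r$: $\Gamma\Rightarrow\phi$ and $\Gamma\Rightarrow\chi$ / $\Gamma\Rightarrow\phi\wedge\chi$; $\vee_l$: $\phi,\Gamma\Rightarrow\psi$ and $\chi,\Gamma\Rightarrow\psi$ / $\phi\vee\chi,\Gamma\Rightarrow\psi$; $\vee_{r_1}$: $\Gamma\Rightarrow\phi$ / $\Gamma\Rightarrow\phi\vee\chi$; $\vee_{r_2}$: $\Gamma\Rightarrow\chi$ / $\Gamma\Rightarrow\phi\vee\chi$; ${\sim}\vee_l$: ${\sim}\phi,{\sim}\chi,\Gamma\Rightarrow\psi$ / ${\sim}(\phi\vee\chi),\Gamma\Rightarrow\psi$; ${\sim}\vee_r$: $\Gamma\Rightarrow{\sim}\phi$ and $\Gamma\Rightarrow{\sim}\chi$ / $\Gamma\Rightarrow{\sim}(\phi\vee\chi)$; ${\sim}\wedge_l$: ${\sim}\phi,\Gamma\Rightarrow\psi$ and ${\sim}\chi,\Gamma\Rightarrow\psi$ / ${\sim}(\phi\wedge\chi),\Gamma\Rightarrow\psi$; ${\sim}\wedge_{r_1}$: $\Gamma\Rightarrow{\sim}\phi$ / $\Gamma\Rightarrow{\sim}(\phi\wedge\chi)$; ${\sim}\wedge_{r_2}$: $\Gamma\Rightarrow{\sim}\chi$ / $\Gamma\Rightarrow{\sim}(\phi\wedge\chi)$;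 $\to_l$: $\phi\to\chi,\Gamma\Rightarrow\phi$ and $\chi,\Gamma\Rightarrow\psi$ / $\phi\to\chi,\Gamma\Rightarrow\psi$; $\to_r$: $\Gamma,\phi\Rightarrow\chi$ / $\Gamma\Rightarrow\phi\to\chi$; ${\sim}\!\to_l$: $\phi,{\sim}\chi,\Gamma\Rightarrow\psi$ / ${\sim}(\phi\to\chi),\Gamma\Rightarrow\psi$; ${\sim}\!\to_r$: $\Gamma\Rightarrow\phi$ and $\Gamma\Rightarrow{\sim}\chi$ / $\Gamma\Rightarrow{\sim}(\phi\to\chi)$. Modal rules: $\Box$: $\Gamma^\Box\Rightarrow\chi$ / $\Gamma\Rightarrow\Box\chi$; $\Diamond$: $\phi\Rightarrow\chi$ / $\Gamma,\Diamond\phi\Rightarrow\Diamond\chi$; $\Box_\sim$: ${\sim}\phi\Rightarrow{\sim}\chi$ / $\Gamma,{\sim}\Box\phi\Rightarrow{\sim}\Box\chi$; $\Diamond_\sim$: $\Gamma^\Diamond_\sim\Rightarrow{\sim}\chi$ / $\Gamma\Rightarrow{\sim}\Diamond\chi$; $\Diamond^\pm$: $\Gamma^\Box,\phi\Rightarrow\chi$ / $\Gamma,\Diamond\phi\Rightarrow\Diamond\chi$; $\Box^\pm_\sim$: $\Gamma^\Diamond_\sim,{\sim}\phi\Rightarrow{\sim}\chi$ / $\Gamma,{\sim}\Box\phi\Rightarrow{\sim}\Box\chi$; $\Diamond^\curlyvee$: $\Gamma^\Diamond_\sim,\phi\Rightarrow\chi$ / $\Gamma,\Diamond\phi\Rightarrow\Diamond\chi$;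 $\Box^\curlyvee_\sim$: $\Gamma^\Box,{\sim}\phi\Rightarrow{\sim}\chi$ / $\Gamma,{\sim}\Box\phi\Rightarrow{\sim}\Box\chi$; $\Box^{\Join}$: $\Gamma^\Box,\Gamma^\Diamond_\sim\Rightarrow\chi$ / $\Gamma\Rightarrow\Box\chi$; $\Diamond^{\Join}$: ${\sim}\phi\Rightarrow\chi$ / $\Gamma,{\sim}\Box\phi\Rightarrow\Diamond\chi$; $\Box^{\Join}_\sim$: $\phi\Rightarrow{\sim}\chi$ / $\Gamma,\Diamond\phi\Rightarrow{\sim}\Box\chi$; $\Diamond^{\Join}_\sim$: $\Gamma^\Box,\Gamma^\Diamond_\sim\Rightarrow{\sim}\chi$ / $\Gamma\Rightarrow{\sim}\Diamond\chi$; $\Diamond^1$: $\Gamma^\Box,\Gamma^\Diamond_\sim,\phi\Rightarrow\chi$ / $\Gamma,\Diamond\phi\Rightarrow\Diamond\chi$; $\Box^1_\sim$: $\Gamma^\Box,\Gamma^\Diamond_\sim,{\sim}\phi\Rightarrow{\sim}\chi$ / $\Gamma,{\sim}\Box\phi\Rightarrow{\sim}\Box\chi$; $\Diamond^{1,\Join}$: $\Gamma^\Box,\Gamma^\Diamond_\sim,{\sim}\phi\Rightarrow\chi$ / $\Gamma,{\sim}\Box\phi\Rightarrow\Diamond\chi$; $\Box^{1,\Join}_\sim$: $\Gamma^\Box,\Gamma^\Diamond_\sim,\phi\Rightarrow{\sim}\chi$ / $\Gamma,\Diamond\phi\Rightarrow{\sim}\Box\chi$. Calculi: $\mathcal{G}\mathsf{CN4K}=\mathcal{G}\mathsf{N4}+\{\Box,\Diamond,\Box_\sim,\Diamond_\sim\}$;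 $\mathcal{G}\mathsf{CN4K}^\curlyvee=\mathcal{G}\mathsf{N4}+\{\Box,\Diamond^\curlyvee,\Box^\curlyvee_\sim,\Diamond_\sim\}$; $\mathcal{G}\mathsf{CN4K}^\pm=\mathcal{G}\mathsf{N4}+\{\Box,\Diamond^\pm,\Box^\pm_\sim,\Diamond_\sim\}$; $\mathcal{G}\mathsf{CN4K}^{\Join}=\mathcal{G}\mathsf{N4}+\{\Box^{\Join},\Diamond,\Diamond^{\Join},\Box_\sim,\Box^{\Join}_\sim,\Diamond^{\Join}_\sim\}$; $\mathcal{G}\mathsf{CN4K}^1=\mathcal{G}\mathsf{N4}+\{\Box^{\Join},\Diamond^1,\Diamond^{1,\Join},\Box^1_\sim,\Box^{1,\Join}_\sim,\Diamond^{\Join}_\sim\}$. A proof is a finite tree of sequents, each node obtained from its children by a rule, whose leaves are axioms. *)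

(* Defs.v *)
From Stdlib Require Import List Permutation.
Import ListNotations.

Definition Prop_var := nat.

Inductive form : Type :=
| Var  : Prop_var -> form
| Neg  : form -> form          (* strong negation ~ *)
| And  : form -> form -> form
| Or   : form -> form -> form
| Imp  : form -> form -> form
| Box  : form -> form
| Dia  : form -> form.

Fixpoint modal_free (f : form) : Prop :=
  match f with
  | Var _ => True
  | Neg a => modal_free a
  | And a b | Or a b | Imp a b => modal_free a /\ modal_free b
  | Box _ | Dia _ => False
  end.

Fixpoint box_part (G : list form) : list form :=
  match G with
  | [] => []
  | Box a :: G' => a :: box_part G'
  | _ :: G' => box_part G'
  end.

Fixpoint negdia_part (G : list form) : list form :=
  match G with
  | [] => []
  | Neg (Dia a) :: G' => Neg a :: negdia_part G'
  | _ :: G' => negdia_part G'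
  end.

Inductive calculus : Type :=
| GN4 | GCN4K | GCN4Kvee | GCN4Kpm | GCN4Kjoin | GCN4K1.

Definition has_Box L := match L with GCN4K | GCN4Kvee | GCN4Kpm => true | _ => false end.
Definition has_Dia L := match L with GCN4K | GCN4Kjoin => true | _ => false end.
Definition has_Box_neg L := match L with GCN4K | GCN4Kjoin => true | _ => false end.
Definition has_Dia_neg L := match L with GCN4K | GCN4Kvee | GCN4Kpm => true | _ => false end.
Definition has_Dia_pm L := match L with GCN4Kpm => true | _ => false end.
Definition has_Box_neg_pm L := match L with GCN4Kpm => true | _ => false end.
Definition has_Dia_vee L := match L with GCN4Kvee => true | _ => false end.
Definition has_Box_neg_vee L := match L with GCN4Kvee => true | _ => false end.
Definition has_Box_join L := match L with GCN4Kjoin | GCN4K1 => true | _ => false end.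
Definition has_Dia_join L := match L with GCN4Kjoin => true | _ => false end.
Definition has_Box_neg_join L := match L with GCN4Kjoin => true | _ => false end.
Definition has_Dia_neg_join L := match L with GCN4Kjoin | GCN4K1 => true | _ => false end.
Definition has_one L := match L with GCN4K1 => true | _ => false end.

(* Sequents Gamma => phi with Gamma a multiset: represented by a list, where
   every rule's conclusion antecedent is taken up to permutation
   (the hypothesis [Permutation D (...)]). *)
Inductive prov (L : calculus) : list form -> form -> Prop :=
| ax_p : forall p G D, Permutation D (Var p :: G) -> prov L D (Var p)
| ax_np : forall p G D, Permutation D (Neg (Var p) :: G) -> prov L D (Neg (Var p))
| nn_l : forall a G D c, Permutation D (Neg (Neg a) :: G) ->
    prov L (a :: G) c -> prov L D c
| nn_r : forall G a, prov L G a -> prov L G (Neg (Neg a))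
| and_l : forall a b G D c, Permutation D (And a b :: G) ->
    prov L (a :: b :: G) c -> prov L D c
| and_r : forall G a b, prov L G a -> prov L G b -> prov L G (And a b)
| or_l : forall a b G D c, Permutation D (Or a b :: G) ->
    prov L (a :: G) c -> prov L (b :: G) c -> prov L D c
| or_r1 : forall G a b, prov L G a -> prov L G (Or a b)
| or_r2 : forall G a b, prov L G b -> prov L G (Or a b)
| nor_l : forall a b G D c, Permutation D (Neg (Or a b) :: G) ->
    prov L (Neg a :: Neg b :: G) c -> prov L D c
| nor_r : forall G a b, prov L G (Neg a) -> prov L G (Neg b) -> prov L G (Neg (Or a b))
| nand_l : forall a b G D c, Permutation D (Neg (And a b) :: G) ->
    prov L (Neg a :: G) c -> prov L (Neg b :: G) c -> prov L D c
| nand_r1 : forall G a b, prov L G (Neg a) -> prov L G (Neg (And a b))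
| nand_r2 : forall G a b, prov L G (Neg b) -> prov L G (Neg (And a b))
| imp_l : forall a b G D c, Permutation D (Imp a b :: G) ->
    prov L (Imp a b :: G) a -> prov L (b :: G) c -> prov L D c
| imp_r : forall G a b, prov L (G ++ [a]) b -> prov L G (Imp a b)
| nimp_l : forall a b G D c, Permutation D (Neg (Imp a b) :: G) ->
    prov L (a :: Neg b :: G) c -> prov L D c
| nimp_r : forall G a b, prov L G a -> prov L G (Neg b) -> prov L G (Neg (Imp a b))
| r_Box : forall G c, has_Box L = true ->
    prov L (box_part G) c -> prov L G (Box c)
| r_Dia : forall a G D c, has_Dia L = true -> Permutation D (Dia a :: G) ->
    prov L [a] c -> prov L D (Dia c)
| r_Box_neg : forall a G D c, has_Box_neg L = true -> Permutation D (Neg (Box a) :: G) ->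
    prov L [Neg a] (Neg c) -> prov L D (Neg (Box c))
| r_Dia_neg : forall G c, has_Dia_neg L = true ->
    prov L (negdia_part G) (Neg c) -> prov L G (Neg (Dia c))
| r_Dia_pm : forall a G D c, has_Dia_pm L = true -> Permutation D (Dia a :: G) ->
    prov L (box_part G ++ [a]) c -> prov L D (Dia c)
| r_Box_neg_pm : forall a G D c, has_Box_neg_pm L = true -> Permutation D (Neg (Box a) :: G) ->
    prov L (negdia_part G ++ [Neg a]) (Neg c) -> prov L D (Neg (Box c))
| r_Dia_vee : forall a G D c, has_Dia_vee L = true -> Permutation D (Dia a :: G) ->
    prov L (negdia_part G ++ [a]) c -> prov L D (Dia c)
| r_Box_neg_vee : forall a G D c, has_Box_neg_vee L = true -> Permutation D (Neg (Box a) :: G) ->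
    prov L (box_part G ++ [Neg a]) (Neg c) -> prov L D (Neg (Box c))
| r_Box_join : forall G c, has_Box_join L = true ->
    prov L (box_part G ++ negdia_part G) c -> prov L G (Box c)
| r_Dia_join : forall a G D c, has_Dia_join L = true -> Permutation D (Neg (Box a) :: G) ->
    prov L [Neg a] c -> prov L D (Dia c)
| r_Box_neg_join : forall a G D c, has_Box_neg_join L = true -> Permutation D (Dia a :: G) ->
    prov L [a] (Neg c) -> prov L D (Neg (Box c))
| r_Dia_neg_join : forall G c, has_Dia_neg_join L = true ->
    prov L (box_part G ++ negdia_part G) (Neg c) -> prov L G (Neg (Dia c))
| r_Dia1 : forall a G D c, has_one L = true -> Permutation D (Dia a :: G) ->
    prov L (box_part G ++ negdia_part G ++ [a]) c -> prov L D (Dia c)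
| r_Box_neg1 : forall a G D c, has_one L = true -> Permutation D (Neg (Box a) :: G) ->
    prov L (box_part G ++ negdia_part G ++ [Neg a]) (Neg c) -> prov L D (Neg (Box c))
| r_Dia1_join : forall a G D c, has_one L = true -> Permutation D (Neg (Box a) :: G) ->
    prov L (box_part G ++ negdia_part G ++ [Neg a]) c -> prov L D (Dia c)
| r_Box_neg1_join : forall a G D c, has_one L = true -> Permutation D (Dia a :: G) ->
    prov L (box_part G ++ negdia_part G ++ [a]) (Neg c) -> prov L D (Neg (Box c)).

(* Main.v *)
Require Import Defs.
From Stdlib Require Import List Permutation Lia.
Import ListNotations.

Lemma in_box_part x G : In x (box_part G) <-> In (Box x) G.
Proof.
  induction G as [|y G IH]; simpl; [tauto|].
  destruct y; simpl; rewrite ?IH; split; intros H; simpl in *;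
    try (destruct H as [H|H]; [try discriminate; try (inversion H; subst; auto) | auto]); auto.
Qed.

Lemma in_negdia x G : In x (negdia_part G) <-> exists a, x = Neg a /\ In (Neg (Dia a)) G.
Proof.
  induction G as [|y G IH]; simpl; [firstorder|].
  assert (E: negdia_part (y :: G) = match y with Neg (Dia a) => Neg a :: negdia_part G | _ => negdia_part G end)
    by (destruct y; try destruct y; reflexivity).
  change (In x (negdia_part (y :: G)) <-> (exists a, x = Neg a /\ (y = Neg (Dia a) \/ In (Neg (Dia a)) G))).
  rewrite E. destruct y; try destruct y; simpl; rewrite ?IH;
  (split; [intros H | intros [a [Ha [Hb|Hb]]]]); try discriminate; eauto;
  try (destruct H as [H|[a [Ha Hb]]]); subst; eauto; try (injection Hb; intros; subst; auto).
all: try (destruct H as [a [Ha Hb]]; exists a; auto; fail). Qed.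

Lemma box_part_app A B : box_part (A ++ B) = box_part A ++ box_part B.
Proof. induction A as [|a A IH]; simpl; auto. destruct a; simpl; congruence. Qed.
Lemma negdia_part_app A B : negdia_part (A ++ B) = negdia_part A ++ negdia_part B.
Proof. induction A as [|a A IH]; simpl; auto. destruct a; try destruct a; simpl; congruence. Qed.

Lemma box_mono A B : incl A B -> incl (box_part A) (box_part B).
Proof. intros H x Hx. apply in_box_part. apply H. apply in_box_part; auto. Qed.
Lemma negdia_mono A B : incl A B -> incl (negdia_part A) (negdia_part B).
Proof. intros H x Hx. apply in_negdia in Hx. apply in_negdia. firstorder. Qed.

Lemma in_perm {A} (x : A) G : In x G -> exists R, Permutation G (x :: R).
Proof. intros H. destruct (in_split _ _ H) as [l1 [l2 ->]]. exists (l1 ++ l2).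
  apply Permutation_sym, Permutation_middle. Qed.
Lemma perm_head {A} (D G : list A) P : Permutation D (P :: G) -> In P D.
Proof. intros H. apply (Permutation_in _ (Permutation_sym H)). left; auto. Qed.
Lemma perm_tail {A} (D G : list A) P x : Permutation D (P :: G) -> In x G -> In x D.
Proof. intros H Hx. apply (Permutation_in _ (Permutation_sym H)). right; auto. Qed.
Lemma perm_incl {A} (D G : list A) P : Permutation D (P :: G) -> incl G D.
Proof. intros H x. apply perm_tail with P; auto. Qed.
Lemma perm_other {A} (G R : list A) P y : Permutation G (P :: R) -> In y G -> y <> P -> In y R.
Proof. intros H Hy Hne. apply (Permutation_in _ H) in Hy. destruct Hy; congruence. Qed.

Lemma box_perm_incl D P R : Permutation D (P :: R) -> (forall x, P <> Box x) ->
  incl (box_part D) (box_part R).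
Proof. intros H Hn x Hx. apply in_box_part in Hx. apply in_box_part.
  eapply perm_other; [eauto|eauto|]. intro e; eapply Hn; eauto. Qed.
Lemma negdia_perm_incl D P R : Permutation D (P :: R) -> (forall x, P <> Neg (Dia x)) ->
  incl (negdia_part D) (negdia_part R).
Proof. intros H Hn x Hx. apply in_negdia in Hx. apply in_negdia.
  destruct Hx as [a [-> Ha]]. exists a; split; auto.
  eapply perm_other; [eauto|eauto|]. intro e; eapply Hn; eauto. Qed.

Inductive cov (D : list form) : form -> Prop :=
| cv_in x : In x D -> cov D x
| cv_nn a : cov D a -> cov D (Neg (Neg a))
| cv_and a b : cov D a -> cov D b -> cov D (And a b)
| cv_or1 a b : cov D a -> cov D (Or a b)
| cv_or2 a b : cov D b -> cov D (Or a b)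
| cv_nor a b : cov D (Neg a) -> cov D (Neg b) -> cov D (Neg (Or a b))
| cv_nand1 a b : cov D (Neg a) -> cov D (Neg (And a b))
| cv_nand2 a b : cov D (Neg b) -> cov D (Neg (And a b))
| cv_imp a b : cov D b -> cov D (Imp a b)
| cv_nimp a b : cov D a -> cov D (Neg b) -> cov D (Neg (Imp a b)).

Lemma cov_mono G G' x : (forall y, In y G -> cov G' y) -> cov G x -> cov G' x.
Proof. intros H Hc. induction Hc; auto.
  - apply cv_nn; auto.
  - apply cv_and; auto.
  - apply cv_or1; auto.
  - apply cv_or2; auto.
  - apply cv_nor; auto.
  - apply cv_nand1; auto.
  - apply cv_nand2; auto.
  - apply cv_imp; auto.
  - apply cv_nimp; auto. Qed.

Ltac covinv H := inversion H; subst; eauto.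

Lemma cov_var G p : cov G (Var p) -> In (Var p) G. Proof. intro H; covinv H. Qed.
Lemma cov_nvar G p : cov G (Neg (Var p)) -> In (Neg (Var p)) G. Proof. intro H; covinv H. Qed.
Lemma cov_box G p : cov G (Box p) -> In (Box p) G. Proof. intro H; covinv H. Qed.
Lemma cov_dia G p : cov G (Dia p) -> In (Dia p) G. Proof. intro H; covinv H. Qed.
Lemma cov_nbox G p : cov G (Neg (Box p)) -> In (Neg (Box p)) G. Proof. intro H; covinv H. Qed.
Lemma cov_ndia G p : cov G (Neg (Dia p)) -> In (Neg (Dia p)) G. Proof. intro H; covinv H. Qed.
Lemma cov_nn G a : cov G (Neg (Neg a)) -> In (Neg (Neg a)) G \/ cov G a. Proof. intro H; covinv H. Qed.
Lemma cov_and G a b : cov G (And a b) -> In (And a b) G \/ (cov G a /\ cov G b). Proof. intro H; covinv H. Qed.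
Lemma cov_or G a b : cov G (Or a b) -> In (Or a b) G \/ cov G a \/ cov G b. Proof. intro H; covinv H. Qed.
Lemma cov_nor G a b : cov G (Neg (Or a b)) -> In (Neg (Or a b)) G \/ (cov G (Neg a) /\ cov G (Neg b)). Proof. intro H; covinv H. Qed.
Lemma cov_nand G a b : cov G (Neg (And a b)) -> In (Neg (And a b)) G \/ cov G (Neg a) \/ cov G (Neg b). Proof. intro H; covinv H. Qed.
Lemma cov_imp G a b : cov G (Imp a b) -> In (Imp a b) G \/ cov G b. Proof. intro H; covinv H. Qed.
Lemma cov_nimp G a b : cov G (Neg (Imp a b)) -> In (Neg (Imp a b)) G \/ (cov G a /\ cov G (Neg b)). Proof. intro H; covinv H. Qed.

Lemma W_aux D P G G' R C : Permutation D (P :: G) -> (forall y, In y D -> cov G' y) ->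
  Permutation G' (P :: R) -> cov (C ++ R) P -> forall x, In x (C ++ G) -> cov (C ++ R) x.
Proof.
  intros HD HG HR HP x Hx. apply in_app_iff in Hx as [Hx|Hx].
  - apply cv_in, in_app_iff; auto.
  - apply cov_mono with G'; [|apply HG; eapply perm_tail; eauto].
    intros y Hy. apply (Permutation_in _ HR) in Hy. destruct Hy as [<-|Hy]; auto.
    apply cv_in, in_app_iff; auto.
Qed.

Lemma W_aux2 D P G G' C : Permutation D (P :: G) -> (forall y, In y D -> cov G' y) ->
  (forall x, In x C -> cov G' x) -> forall x, In x (C ++ G) -> cov G' x.
Proof.
  intros HD HG HC x Hx. apply in_app_iff in Hx as [Hx|Hx]; auto.
  apply HG; eapply perm_tail; eauto.
Qed.

Lemma cov_incl A B : incl A B -> forall x, In x A -> cov B x.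
Proof. intros H x Hx; apply cv_in; auto. Qed.

Lemma box_tr D P G G' Q R : Permutation D (P :: G) -> (forall y, In y D -> cov G' y) ->
  Permutation G' (Q :: R) -> (forall x, Q <> Box x) -> incl (box_part G) (box_part R).
Proof.
  intros HD HG HR HQ x Hx. apply in_box_part in Hx. apply in_box_part.
  eapply perm_other; [exact HR| |].
  apply cov_box, HG. eapply perm_tail; eauto.
  intro e; eapply HQ; eauto.
Qed.
Lemma negdia_tr D P G G' Q R : Permutation D (P :: G) -> (forall y, In y D -> cov G' y) ->
  Permutation G' (Q :: R) -> (forall x, Q <> Neg (Dia x)) -> incl (negdia_part G) (negdia_part R).
Proof.
  intros HD HG HR HQ x Hx. apply in_negdia in Hx as [a [-> Ha]]. apply in_negdia.
  exists a; split; auto.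
  eapply perm_other; [exact HR| |].
  apply cov_ndia, HG. eapply perm_tail; eauto.
  intro e; eapply HQ; eauto.
Qed.
Lemma box_tr0 G G' : (forall y, In y G -> cov G' y) -> incl (box_part G) (box_part G').
Proof. intros HG x Hx. apply in_box_part in Hx. apply in_box_part. apply cov_box; auto. Qed.
Lemma negdia_tr0 G G' : (forall y, In y G -> cov G' y) -> incl (negdia_part G) (negdia_part G').
Proof. intros HG x Hx. apply in_negdia in Hx as [a [-> Ha]]. apply in_negdia.
  exists a; split; auto. apply cov_ndia; auto. Qed.
Ltac w2 C Hp HG := apply (W_aux2 _ _ _ _ C Hp HG);
  let x:= fresh in let Hx := fresh in intros x Hx; simpl in Hx;
  repeat (destruct Hx as [<-|Hx]; [assumption|]); contradiction.
Ltac w1 C Hp HG HR := apply (W_aux _ _ _ _ _ C Hp HG HR).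
Ltac nb := let x := fresh in let e := fresh in intros x e; discriminate.
Ltac hd := simpl; left; reflexivity.

Lemma W L G c (H : prov L G c) : forall G', (forall x, In x G -> cov G' x) -> prov L G' c.
Proof.
  induction H as [p G D Hp | p G D Hp | a G D c Hp H1 IH1 | G a H1 IH1
   | a b G D c Hp H1 IH1 | G a b H1 IH1 H2 IH2 | a b G D c Hp H1 IH1 H2 IH2
   | G a b H1 IH1 | G a b H1 IH1 | a b G D c Hp H1 IH1 | G a b H1 IH1 H2 IH2
   | a b G D c Hp H1 IH1 H2 IH2 | G a b H1 IH1 | G a b H1 IH1
   | a b G D c Hp H1 IH1 H2 IH2 | G a b H1 IH1 | a b G D c Hp H1 IH1 | G a b H1 IH1 H2 IH2
   | G c Hh H1 IH1 | a G D c Hh Hp H1 IH1 | a G D c Hh Hp H1 IH1 | G c Hh H1 IH1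
   | a G D c Hh Hp H1 IH1 | a G D c Hh Hp H1 IH1 | a G D c Hh Hp H1 IH1 | a G D c Hh Hp H1 IH1
   | G c Hh H1 IH1 | a G D c Hh Hp H1 IH1 | a G D c Hh Hp H1 IH1 | G c Hh H1 IH1
   | a G D c Hh Hp H1 IH1 | a G D c Hh Hp H1 IH1 | a G D c Hh Hp H1 IH1 | a G D c Hh Hp H1 IH1];
   intros G' HG.
  - destruct (in_perm _ _ (cov_var _ _ (HG _ (perm_head _ _ _ Hp)))) as [R HR]. eapply ax_p; exact HR.
  - destruct (in_perm _ _ (cov_nvar _ _ (HG _ (perm_head _ _ _ Hp)))) as [R HR]. eapply ax_np; exact HR.
  - destruct (cov_nn _ _ (HG _ (perm_head _ _ _ Hp))) as [Hin|Hc].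
    + destruct (in_perm _ _ Hin) as [R HR]. eapply nn_l; [exact HR|]. apply IH1.
      w1 [a] Hp HG HR. apply cv_nn, cv_in; hd.
    + apply IH1. w2 [a] Hp HG.
  - apply nn_r; auto.
  - destruct (cov_and _ _ _ (HG _ (perm_head _ _ _ Hp))) as [Hin|[Hc1 Hc2]].
    + destruct (in_perm _ _ Hin) as [R HR]. eapply and_l; [exact HR|]. apply IH1.
      w1 [a;b] Hp HG HR. apply cv_and; apply cv_in; simpl; auto.
    + apply IH1. w2 [a;b] Hp HG.
  - apply and_r; auto.
  - destruct (cov_or _ _ _ (HG _ (perm_head _ _ _ Hp))) as [Hin|[Hc|Hc]].
    + destruct (in_perm _ _ Hin) as [R HR]. eapply or_l; [exact HR| |].
      * apply IH1. w1 [a] Hp HG HR. apply cv_or1, cv_in; hd.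
      * apply IH2. w1 [b] Hp HG HR. apply cv_or2, cv_in; hd.
    + apply IH1. w2 [a] Hp HG.
    + apply IH2. w2 [b] Hp HG.
  - apply or_r1; auto.
  - apply or_r2; auto.
  - destruct (cov_nor _ _ _ (HG _ (perm_head _ _ _ Hp))) as [Hin|[Hc1 Hc2]].
    + destruct (in_perm _ _ Hin) as [R HR]. eapply nor_l; [exact HR|]. apply IH1.
      w1 [Neg a;Neg b] Hp HG HR. apply cv_nor; apply cv_in; simpl; auto.
    + apply IH1. w2 [Neg a;Neg b] Hp HG.
  - apply nor_r; auto.
  - destruct (cov_nand _ _ _ (HG _ (perm_head _ _ _ Hp))) as [Hin|[Hc|Hc]].
    + destruct (in_perm _ _ Hin) as [R HR]. eapply nand_l; [exact HR| |].
      * apply IH1. w1 [Neg a] Hp HG HR. apply cv_nand1, cv_in; hd.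
      * apply IH2. w1 [Neg b] Hp HG HR. apply cv_nand2, cv_in; hd.
    + apply IH1. w2 [Neg a] Hp HG.
    + apply IH2. w2 [Neg b] Hp HG.
  - apply nand_r1; auto.
  - apply nand_r2; auto.
  - destruct (cov_imp _ _ _ (HG _ (perm_head _ _ _ Hp))) as [Hin|Hc].
    + destruct (in_perm _ _ Hin) as [R HR]. eapply imp_l; [exact HR| |].
      * apply IH1. w1 [Imp a b] Hp HG HR. apply cv_in; hd.
      * apply IH2. w1 [b] Hp HG HR. apply cv_imp, cv_in; hd.
    + apply IH2. w2 [b] Hp HG.
  - apply imp_r. apply IH1. intros x Hx. apply in_app_iff in Hx as [Hx|Hx].
    + apply cov_mono with G'; auto. intros y Hy; apply cv_in, in_app_iff; auto.
    + apply cv_in, in_app_iff; auto.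
  - destruct (cov_nimp _ _ _ (HG _ (perm_head _ _ _ Hp))) as [Hin|[Hc1 Hc2]].
    + destruct (in_perm _ _ Hin) as [R HR]. eapply nimp_l; [exact HR|]. apply IH1.
      w1 [a;Neg b] Hp HG HR. apply cv_nimp; apply cv_in; simpl; auto.
    + apply IH1. w2 [a;Neg b] Hp HG.
  - apply nimp_r; auto.
  - apply r_Box; auto. apply IH1, cov_incl, box_tr0; auto.
  - destruct (in_perm _ _ (cov_dia _ _ (HG _ (perm_head _ _ _ Hp)))) as [R HR].
    eapply r_Dia; eauto.
  - destruct (in_perm _ _ (cov_nbox _ _ (HG _ (perm_head _ _ _ Hp)))) as [R HR].
    eapply r_Box_neg; eauto.
  - apply r_Dia_neg; auto. apply IH1, cov_incl, negdia_tr0; auto.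
  - destruct (in_perm _ _ (cov_dia _ _ (HG _ (perm_head _ _ _ Hp)))) as [R HR].
    eapply r_Dia_pm; [exact Hh|exact HR|]. apply IH1, cov_incl, incl_app_app; [|apply incl_refl].
    eapply box_tr; [exact Hp|exact HG|exact HR|nb].
  - destruct (in_perm _ _ (cov_nbox _ _ (HG _ (perm_head _ _ _ Hp)))) as [R HR].
    eapply r_Box_neg_pm; [exact Hh|exact HR|]. apply IH1, cov_incl, incl_app_app; [|apply incl_refl].
    eapply negdia_tr; [exact Hp|exact HG|exact HR|nb].
  - destruct (in_perm _ _ (cov_dia _ _ (HG _ (perm_head _ _ _ Hp)))) as [R HR].
    eapply r_Dia_vee; [exact Hh|exact HR|]. apply IH1, cov_incl, incl_app_app; [|apply incl_refl].
    eapply negdia_tr; [exact Hp|exact HG|exact HR|nb].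
  - destruct (in_perm _ _ (cov_nbox _ _ (HG _ (perm_head _ _ _ Hp)))) as [R HR].
    eapply r_Box_neg_vee; [exact Hh|exact HR|]. apply IH1, cov_incl, incl_app_app; [|apply incl_refl].
    eapply box_tr; [exact Hp|exact HG|exact HR|nb].
  - apply r_Box_join; auto. apply IH1, cov_incl, incl_app_app; [apply box_tr0|apply negdia_tr0]; auto.
  - destruct (in_perm _ _ (cov_nbox _ _ (HG _ (perm_head _ _ _ Hp)))) as [R HR].
    eapply r_Dia_join; eauto.
  - destruct (in_perm _ _ (cov_dia _ _ (HG _ (perm_head _ _ _ Hp)))) as [R HR].
    eapply r_Box_neg_join; eauto.
  - apply r_Dia_neg_join; auto. apply IH1, cov_incl, incl_app_app; [apply box_tr0|apply negdia_tr0]; auto.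
  - destruct (in_perm _ _ (cov_dia _ _ (HG _ (perm_head _ _ _ Hp)))) as [R HR].
    eapply r_Dia1; [exact Hh|exact HR|]. apply IH1, cov_incl, incl_app_app; [|apply incl_app_app; [|apply incl_refl]].
    eapply box_tr; [exact Hp|exact HG|exact HR|nb]. eapply negdia_tr; [exact Hp|exact HG|exact HR|nb].
  - destruct (in_perm _ _ (cov_nbox _ _ (HG _ (perm_head _ _ _ Hp)))) as [R HR].
    eapply r_Box_neg1; [exact Hh|exact HR|]. apply IH1, cov_incl, incl_app_app; [|apply incl_app_app; [|apply incl_refl]].
    eapply box_tr; [exact Hp|exact HG|exact HR|nb]. eapply negdia_tr; [exact Hp|exact HG|exact HR|nb].
  - destruct (in_perm _ _ (cov_nbox _ _ (HG _ (perm_head _ _ _ Hp)))) as [R HR].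
    eapply r_Dia1_join; [exact Hh|exact HR|]. apply IH1, cov_incl, incl_app_app; [|apply incl_app_app; [|apply incl_refl]].
    eapply box_tr; [exact Hp|exact HG|exact HR|nb]. eapply negdia_tr; [exact Hp|exact HG|exact HR|nb].
  - destruct (in_perm _ _ (cov_dia _ _ (HG _ (perm_head _ _ _ Hp)))) as [R HR].
    eapply r_Box_neg1_join; [exact Hh|exact HR|]. apply IH1, cov_incl, incl_app_app; [|apply incl_app_app; [|apply incl_refl]].
    eapply box_tr; [exact Hp|exact HG|exact HR|nb]. eapply negdia_tr; [exact Hp|exact HG|exact HR|nb].
Qed.

Lemma Wi L G G' c : prov L G c -> incl G G' -> prov L G' c.
Proof. intros H Hi. apply (W L G c H). apply cov_incl; auto. Qed.
Lemma cov_D D P R C : Permutation D (P :: R) -> cov (C ++ R) P ->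
  forall x, In x (C ++ D) -> cov (C ++ R) x.
Proof.
  intros HR HP x Hx. apply in_app_iff in Hx as [Hx|Hx].
  - apply cv_in, in_app_iff; auto.
  - apply (Permutation_in _ HR) in Hx. destruct Hx as [<-|Hx]; auto.
    apply cv_in, in_app_iff; auto.
Qed.
Lemma perm_incl2 {A} (D R : list A) P : Permutation D (P :: R) -> incl D (P :: R).
Proof. intros H x Hx. apply (Permutation_in _ H); auto. Qed.

Section Smart.
Variable L : calculus.
Lemma ax_p' p D : In (Var p) D -> prov L D (Var p).
Proof. intros H; destruct (in_perm _ _ H) as [R HR]; eapply ax_p; eauto. Qed.
Lemma ax_np' p D : In (Neg (Var p)) D -> prov L D (Neg (Var p)).
Proof. intros H; destruct (in_perm _ _ H) as [R HR]; eapply ax_np; eauto. Qed.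
Lemma nn_l' a D c : In (Neg (Neg a)) D -> prov L (a :: D) c -> prov L D c.
Proof. intros H H1; destruct (in_perm _ _ H) as [R HR]; eapply nn_l; [exact HR|].
  apply (W _ _ _ H1). apply (cov_D _ _ _ [a] HR). apply cv_nn, cv_in; hd. Qed.
Lemma and_l' a b D c : In (And a b) D -> prov L (a :: b :: D) c -> prov L D c.
Proof. intros H H1; destruct (in_perm _ _ H) as [R HR]; eapply and_l; [exact HR|].
  apply (W _ _ _ H1). apply (cov_D _ _ _ [a;b] HR). apply cv_and; apply cv_in; simpl; auto. Qed.
Lemma or_l' a b D c : In (Or a b) D -> prov L (a :: D) c -> prov L (b :: D) c -> prov L D c.
Proof. intros H H1 H2; destruct (in_perm _ _ H) as [R HR]; eapply or_l; [exact HR| |].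
  apply (W _ _ _ H1). apply (cov_D _ _ _ [a] HR). apply cv_or1; apply cv_in; simpl; auto.
  apply (W _ _ _ H2). apply (cov_D _ _ _ [b] HR). apply cv_or2; apply cv_in; simpl; auto. Qed.
Lemma nor_l' a b D c : In (Neg (Or a b)) D -> prov L (Neg a :: Neg b :: D) c -> prov L D c.
Proof. intros H H1; destruct (in_perm _ _ H) as [R HR]; eapply nor_l; [exact HR|].
  apply (W _ _ _ H1). apply (cov_D _ _ _ [Neg a;Neg b] HR). apply cv_nor; apply cv_in; simpl; auto. Qed.
Lemma nand_l' a b D c : In (Neg (And a b)) D -> prov L (Neg a :: D) c -> prov L (Neg b :: D) c -> prov L D c.
Proof. intros H H1 H2; destruct (in_perm _ _ H) as [R HR]; eapply nand_l; [exact HR| |].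
  apply (W _ _ _ H1). apply (cov_D _ _ _ [Neg a] HR). apply cv_nand1; apply cv_in; simpl; auto.
  apply (W _ _ _ H2). apply (cov_D _ _ _ [Neg b] HR). apply cv_nand2; apply cv_in; simpl; auto. Qed.
Lemma imp_l' a b D c : In (Imp a b) D -> prov L D a -> prov L (b :: D) c -> prov L D c.
Proof. intros H H1 H2; destruct (in_perm _ _ H) as [R HR]; eapply imp_l; [exact HR| |].
  apply (Wi _ _ _ _ H1). apply perm_incl2; auto.
  apply (W _ _ _ H2). apply (cov_D _ _ _ [b] HR). apply cv_imp; apply cv_in; simpl; auto. Qed.
Lemma nimp_l' a b D c : In (Neg (Imp a b)) D -> prov L (a :: Neg b :: D) c -> prov L D c.
Proof. intros H H1; destruct (in_perm _ _ H) as [R HR]; eapply nimp_l; [exact HR|].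
  apply (W _ _ _ H1). apply (cov_D _ _ _ [a;Neg b] HR). apply cv_nimp; apply cv_in; simpl; auto. Qed.

Ltac msm H R HR := destruct (in_perm _ _ H) as [R HR].
Ltac bx HR := first [ apply (box_perm_incl _ _ _ HR); nb | apply (negdia_perm_incl _ _ _ HR); nb ].
Ltac mfin H1 HR := apply (Wi _ _ _ _ H1); repeat apply incl_app_app; first [apply incl_refl | bx HR].

Lemma r_Dia' a D c : has_Dia L = true -> In (Dia a) D -> prov L [a] c -> prov L D (Dia c).
Proof. intros Hh H H1; msm H R HR; eapply r_Dia; eauto. Qed.
Lemma r_Box_neg' a D c : has_Box_neg L = true -> In (Neg (Box a)) D -> prov L [Neg a] (Neg c) -> prov L D (Neg (Box c)).
Proof. intros Hh H H1; msm H R HR; eapply r_Box_neg; eauto. Qed.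
Lemma r_Dia_join' a D c : has_Dia_join L = true -> In (Neg (Box a)) D -> prov L [Neg a] c -> prov L D (Dia c).
Proof. intros Hh H H1; msm H R HR; eapply r_Dia_join; eauto. Qed.
Lemma r_Box_neg_join' a D c : has_Box_neg_join L = true -> In (Dia a) D -> prov L [a] (Neg c) -> prov L D (Neg (Box c)).
Proof. intros Hh H H1; msm H R HR; eapply r_Box_neg_join; eauto. Qed.
Lemma r_Dia_pm' a D c : has_Dia_pm L = true -> In (Dia a) D -> prov L (box_part D ++ [a]) c -> prov L D (Dia c).
Proof. intros Hh H H1; msm H R HR; eapply r_Dia_pm; [eauto|eauto|]; mfin H1 HR. Qed.
Lemma r_Box_neg_pm' a D c : has_Box_neg_pm L = true -> In (Neg (Box a)) D -> prov L (negdia_part D ++ [Neg a]) (Neg c) -> prov L D (Neg (Box c)).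
Proof. intros Hh H H1; msm H R HR; eapply r_Box_neg_pm; [eauto|eauto|]; mfin H1 HR. Qed.
Lemma r_Dia_vee' a D c : has_Dia_vee L = true -> In (Dia a) D -> prov L (negdia_part D ++ [a]) c -> prov L D (Dia c).
Proof. intros Hh H H1; msm H R HR; eapply r_Dia_vee; [eauto|eauto|]; mfin H1 HR. Qed.
Lemma r_Box_neg_vee' a D c : has_Box_neg_vee L = true -> In (Neg (Box a)) D -> prov L (box_part D ++ [Neg a]) (Neg c) -> prov L D (Neg (Box c)).
Proof. intros Hh H H1; msm H R HR; eapply r_Box_neg_vee; [eauto|eauto|]; mfin H1 HR. Qed.
Lemma r_Dia1' a D c : has_one L = true -> In (Dia a) D -> prov L (box_part D ++ negdia_part D ++ [a]) c -> prov L D (Dia c).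
Proof. intros Hh H H1; msm H R HR; eapply r_Dia1; [eauto|eauto|]; mfin H1 HR. Qed.
Lemma r_Box_neg1' a D c : has_one L = true -> In (Neg (Box a)) D -> prov L (box_part D ++ negdia_part D ++ [Neg a]) (Neg c) -> prov L D (Neg (Box c)).
Proof. intros Hh H H1; msm H R HR; eapply r_Box_neg1; [eauto|eauto|]; mfin H1 HR. Qed.
Lemma r_Dia1_join' a D c : has_one L = true -> In (Neg (Box a)) D -> prov L (box_part D ++ negdia_part D ++ [Neg a]) c -> prov L D (Dia c).
Proof. intros Hh H H1; msm H R HR; eapply r_Dia1_join; [eauto|eauto|]; mfin H1 HR. Qed.
Lemma r_Box_neg1_join' a D c : has_one L = true -> In (Dia a) D -> prov L (box_part D ++ negdia_part D ++ [a]) (Neg c) -> prov L D (Neg (Box c)).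
Proof. intros Hh H H1; msm H R HR; eapply r_Box_neg1_join; [eauto|eauto|]; mfin H1 HR. Qed.
End Smart.
Fixpoint fsize (f : form) : nat :=
  match f with
  | Var _ => 1
  | Neg a | Box a | Dia a => S (fsize a)
  | And a b | Or a b | Imp a b => S (fsize a + fsize b)
  end.

Definition cutP L psi := forall G D Dl chi, prov L G psi -> prov L D chi ->
  incl D (psi :: Dl) -> prov L (G ++ Dl) chi.

Lemma cut_into L psi G1 D1 T chi : cutP L psi -> prov L G1 psi -> prov L D1 chi ->
  incl D1 (psi :: T) -> incl G1 T -> prov L T chi.
Proof. intros C H1 H2 H3 H4. apply (Wi _ _ _ _ (C _ _ _ _ H1 H2 H3)).
  intros x Hx; apply in_app_iff in Hx as [Hx|Hx]; auto. Qed.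

Inductive rinfo (L : calculus) (G : list form) : form -> Prop :=
| ri_nn a : prov L G a -> rinfo L G (Neg (Neg a))
| ri_and a b : prov L G a -> prov L G b -> rinfo L G (And a b)
| ri_or1 a b : prov L G a -> rinfo L G (Or a b)
| ri_or2 a b : prov L G b -> rinfo L G (Or a b)
| ri_nor a b : prov L G (Neg a) -> prov L G (Neg b) -> rinfo L G (Neg (Or a b))
| ri_nand1 a b : prov L G (Neg a) -> rinfo L G (Neg (And a b))
| ri_nand2 a b : prov L G (Neg b) -> rinfo L G (Neg (And a b))
| ri_imp a b : prov L (G ++ [a]) b -> rinfo L G (Imp a b)
| ri_nimp a b : prov L G a -> prov L G (Neg b) -> rinfo L G (Neg (Imp a b))
| ri_box c : has_Box L = true -> prov L (box_part G) c -> rinfo L G (Box c)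
| ri_box_join c : has_Box_join L = true -> prov L (box_part G ++ negdia_part G) c -> rinfo L G (Box c)
| ri_dneg c : has_Dia_neg L = true -> prov L (negdia_part G) (Neg c) -> rinfo L G (Neg (Dia c))
| ri_dneg_join c : has_Dia_neg_join L = true -> prov L (box_part G ++ negdia_part G) (Neg c) -> rinfo L G (Neg (Dia c))
| ri_dia a c : has_Dia L = true -> In (Dia a) G -> prov L [a] c -> rinfo L G (Dia c)
| ri_bneg a c : has_Box_neg L = true -> In (Neg (Box a)) G -> prov L [Neg a] (Neg c) -> rinfo L G (Neg (Box c))
| ri_dia_pm a c : has_Dia_pm L = true -> In (Dia a) G -> prov L (box_part G ++ [a]) c -> rinfo L G (Dia c)
| ri_bneg_pm a c : has_Box_neg_pm L = true -> In (Neg (Box a)) G -> prov L (negdia_part G ++ [Neg a]) (Neg c) -> rinfo L G (Neg (Box c))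
| ri_dia_vee a c : has_Dia_vee L = true -> In (Dia a) G -> prov L (negdia_part G ++ [a]) c -> rinfo L G (Dia c)
| ri_bneg_vee a c : has_Box_neg_vee L = true -> In (Neg (Box a)) G -> prov L (box_part G ++ [Neg a]) (Neg c) -> rinfo L G (Neg (Box c))
| ri_dia_join a c : has_Dia_join L = true -> In (Neg (Box a)) G -> prov L [Neg a] c -> rinfo L G (Dia c)
| ri_bneg_join a c : has_Box_neg_join L = true -> In (Dia a) G -> prov L [a] (Neg c) -> rinfo L G (Neg (Box c))
| ri_dia1 a c : has_one L = true -> In (Dia a) G -> prov L (box_part G ++ negdia_part G ++ [a]) c -> rinfo L G (Dia c)
| ri_bneg1 a c : has_one L = true -> In (Neg (Box a)) G -> prov L (box_part G ++ negdia_part G ++ [Neg a]) (Neg c) -> rinfo L G (Neg (Box c))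
| ri_dia1_join a c : has_one L = true -> In (Neg (Box a)) G -> prov L (box_part G ++ negdia_part G ++ [Neg a]) c -> rinfo L G (Dia c)
| ri_bneg1_join a c : has_one L = true -> In (Dia a) G -> prov L (box_part G ++ negdia_part G ++ [a]) (Neg c) -> rinfo L G (Neg (Box c)).

Ltac normin H := rewrite ?box_part_app, ?negdia_part_app in H; simpl in H;
  repeat (rewrite in_app_iff in H; simpl in H).
Ltac inc :=
  let x := fresh "x" in let Hx := fresh "Hx" in
  intros x Hx; normin Hx;
  repeat match goal with
  | H : _ \/ _ |- _ => destruct H
  | H : False |- _ => destruct H
  | H : ?a = x |- _ => subst x
  | H : incl ?A _, H2 : In x ?A |- _ => apply H in H2; normin H2
  end;
  rewrite ?box_part_app, ?negdia_part_app; simpl; repeat (rewrite in_app_iff; simpl);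
  solve [intuition auto].

Ltac hc := solve [ match goal with L : calculus |- _ => destruct L; simpl in *; discriminate end ].

Section Absorb.
Variables (L : calculus) (G : list form) (phi : form).
Hypothesis IHs : forall psi, fsize psi < fsize phi -> cutP L psi.
Hypothesis Hri : rinfo L G phi.

Lemma absorb_box D Dl X c : has_Box_join L = false -> incl D (phi :: Dl) ->
  prov L (box_part D ++ X) c -> prov L (box_part G ++ box_part Dl ++ X) c.
Proof.
  intros Hh HD H. pose proof (box_mono _ _ HD) as HB.
  destruct Hri; simpl in HB; try (apply (Wi _ _ _ _ H); inc).
  - eapply cut_into with (psi := c0); [apply IHs; simpl; lia|eassumption|exact H|inc|inc].
  - hc.
Qed.

Lemma absorb_negdia D Dl X c : has_Dia_neg_join L = false -> incl D (phi :: Dl) ->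
  prov L (negdia_part D ++ X) c -> prov L (negdia_part G ++ negdia_part Dl ++ X) c.
Proof.
  intros Hh HD H. pose proof (negdia_mono _ _ HD) as HB.
  destruct Hri; simpl in HB; try (apply (Wi _ _ _ _ H); inc).
  - eapply cut_into with (psi := Neg c0); [apply IHs; simpl; lia|eassumption|exact H|inc|inc].
  - hc.
Qed.

Lemma absorb_both D Dl X c : has_Box L = false -> has_Dia_neg L = false -> incl D (phi :: Dl) ->
  prov L (box_part D ++ negdia_part D ++ X) c ->
  prov L (box_part G ++ negdia_part G ++ box_part Dl ++ negdia_part Dl ++ X) c.
Proof.
  intros Hh Hh' HD H. pose proof (box_mono _ _ HD) as HB. pose proof (negdia_mono _ _ HD) as HN.
  destruct Hri; simpl in HB, HN; try (apply (Wi _ _ _ _ H); inc); try hc.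
  - eapply cut_into with (psi := c0); [apply IHs; simpl; lia|eassumption|exact H|inc|inc].
  - eapply cut_into with (psi := Neg c0); [apply IHs; simpl; lia|eassumption|exact H|inc|inc].
Qed.
End Absorb.
Ltac fin_cut IHs :=
  match goal with H1 : prov _ ?G1 ?psi, H2 : prov _ ?D1 _ |- prov _ _ _ =>
    eapply (cut_into _ psi G1 D1); [apply IHs; simpl; lia | exact H1 | exact H2 | inc | inc] end.
Ltac hreq := first [assumption | match goal with L : calculus |- _ => destruct L; simpl in *; solve [reflexivity | discriminate] end].
Ltac inl := apply in_app_iff; left; eassumption.
Ltac prin IHs := first
  [ solve [eapply r_Dia'; [hreq | inl | fin_cut IHs]]
  | solve [eapply r_Dia_join'; [hreq | inl | fin_cut IHs]]
  | solve [eapply r_Box_neg'; [hreq | inl | fin_cut IHs]]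
  | solve [eapply r_Box_neg_join'; [hreq | inl | fin_cut IHs]]
  | solve [eapply r_Dia_pm'; [hreq | inl | fin_cut IHs]]
  | solve [eapply r_Box_neg_pm'; [hreq | inl | fin_cut IHs]]
  | solve [eapply r_Dia_vee'; [hreq | inl | fin_cut IHs]]
  | solve [eapply r_Box_neg_vee'; [hreq | inl | fin_cut IHs]]
  | solve [eapply r_Dia1'; [hreq | inl | fin_cut IHs]]
  | solve [eapply r_Box_neg1'; [hreq | inl | fin_cut IHs]]
  | solve [eapply r_Dia1_join'; [hreq | inl | fin_cut IHs]]
  | solve [eapply r_Box_neg1_join'; [hreq | inl | fin_cut IHs]] ].
Ltac inr' := apply in_app_iff; right; eassumption.

Lemma inner L G phi : (forall psi, fsize psi < fsize phi -> cutP L psi) -> rinfo L G phi ->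
  forall D chi, prov L D chi -> forall Dl, incl D (phi :: Dl) -> prov L (G ++ Dl) chi.
Proof.
  intros IHs Hri D chi H.
  induction H as [p G0 D Hp | p G0 D Hp | a G0 D c Hp H1 IH1 | G0 a H1 IH1
   | a b G0 D c Hp H1 IH1 | G0 a b H1 IH1 H2 IH2 | a b G0 D c Hp H1 IH1 H2 IH2
   | G0 a b H1 IH1 | G0 a b H1 IH1 | a b G0 D c Hp H1 IH1 | G0 a b H1 IH1 H2 IH2
   | a b G0 D c Hp H1 IH1 H2 IH2 | G0 a b H1 IH1 | G0 a b H1 IH1
   | a b G0 D c Hp H1 IH1 H2 IH2 | G0 a b H1 IH1 | a b G0 D c Hp H1 IH1 | G0 a b H1 IH1 H2 IH2
   | G0 c Hh H1 IH1 | a G0 D c Hh Hp H1 IH1 | a G0 D c Hh Hp H1 IH1 | G0 c Hh H1 IH1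
   | a G0 D c Hh Hp H1 IH1 | a G0 D c Hh Hp H1 IH1 | a G0 D c Hh Hp H1 IH1 | a G0 D c Hh Hp H1 IH1
   | G0 c Hh H1 IH1 | a G0 D c Hh Hp H1 IH1 | a G0 D c Hh Hp H1 IH1 | G0 c Hh H1 IH1
   | a G0 D c Hh Hp H1 IH1 | a G0 D c Hh Hp H1 IH1 | a G0 D c Hh Hp H1 IH1 | a G0 D c Hh Hp H1 IH1];
   intros Dl HD;
   try (pose proof (perm_incl _ _ _ Hp) as HG0; pose proof (HD _ (perm_head _ _ _ Hp)) as HP; simpl in HP).
  - destruct HP as [->|HP]; [inversion Hri| apply ax_p'; inr'].
  - destruct HP as [->|HP]; [inversion Hri| apply ax_np'; inr'].
  -
    assert (H' : prov L (G ++ a :: Dl) c) by (apply IH1; inc).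
    destruct HP as [->|HP].
    + inversion Hri; subst. fin_cut IHs.
    + apply (nn_l' _ a); [inr'|]. apply (Wi _ _ _ _ H'); inc.
  - apply nn_r; auto.
  - assert (H' : prov L (G ++ a :: b :: Dl) c) by (apply IH1; inc).
    destruct HP as [->|HP].
    + inversion Hri; subst.
      assert (H2x : prov L (b :: G ++ Dl) c) by fin_cut IHs. clear H'. fin_cut IHs.
    + apply (and_l' _ a b); [inr'|]. apply (Wi _ _ _ _ H'); inc.
  - apply and_r; auto.
  - assert (H' : prov L (G ++ a :: Dl) c) by (apply IH1; inc).
    assert (H'' : prov L (G ++ b :: Dl) c) by (apply IH2; inc).
    destruct HP as [->|HP].
    + inversion Hri; subst; [clear H''|clear H']; fin_cut IHs.
    + apply (or_l' _ a b); [inr'| |]; [apply (Wi _ _ _ _ H')|apply (Wi _ _ _ _ H'')]; inc.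
  - apply or_r1; auto.
  - apply or_r2; auto.
  - assert (H' : prov L (G ++ Neg a :: Neg b :: Dl) c) by (apply IH1; inc).
    destruct HP as [->|HP].
    + inversion Hri; subst.
      assert (H2x : prov L (Neg b :: G ++ Dl) c) by fin_cut IHs. clear H'. fin_cut IHs.
    + apply (nor_l' _ a b); [inr'|]. apply (Wi _ _ _ _ H'); inc.
  - apply nor_r; auto.
  - assert (H' : prov L (G ++ Neg a :: Dl) c) by (apply IH1; inc).
    assert (H'' : prov L (G ++ Neg b :: Dl) c) by (apply IH2; inc).
    destruct HP as [->|HP].
    + inversion Hri; subst; [clear H''|clear H']; fin_cut IHs.
    + apply (nand_l' _ a b); [inr'| |]; [apply (Wi _ _ _ _ H')|apply (Wi _ _ _ _ H'')]; inc.
  - apply nand_r1; auto.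
  - apply nand_r2; auto.
  -
    assert (H' : prov L (G ++ Dl) a) by (apply IH1; inc).
    assert (H'' : prov L (G ++ b :: Dl) c) by (apply IH2; inc).
    destruct HP as [->|HP].
    + inversion Hri; subst. clear H1 H2 IH1 IH2.
      assert (H3 : prov L (G ++ Dl) b).
      { eapply (cut_into _ a (G ++ Dl) (G ++ [a])); [apply IHs; simpl; lia|exact H'|assumption|inc|inc]. }
      eapply (cut_into _ b (G ++ Dl) (G ++ b :: Dl)); [apply IHs; simpl; lia|exact H3|exact H''|inc|inc].
    + apply (imp_l' _ a b); [inr'|exact H'|]. apply (Wi _ _ _ _ H''); inc.
  - apply imp_r. rewrite <- app_assoc. apply IH1; inc.
  - assert (H' : prov L (G ++ a :: Neg b :: Dl) c) by (apply IH1; inc).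
    destruct HP as [->|HP].
    + inversion Hri; subst.
      assert (H2x : prov L (Neg b :: G ++ Dl) c) by fin_cut IHs. clear H'. fin_cut IHs.
    + apply (nimp_l' _ a b); [inr'|]. apply (Wi _ _ _ _ H'); inc.
  - apply nimp_r; auto.
  -
    assert (H' : prov L (box_part G0 ++ []) c) by (rewrite app_nil_r; auto).
    eapply absorb_box in H'; eauto; [|destruct L; simpl in *; congruence].
    apply r_Box; auto. apply (Wi _ _ _ _ H'); inc.
  -
    clear IH1. destruct HP as [->|HP].
    + inversion Hri; subst; try hc; prin IHs.
    + eapply r_Dia'; eauto. inr'.
  - clear IH1. destruct HP as [->|HP].
    + inversion Hri; subst; try hc; prin IHs.
    + eapply r_Box_neg'; eauto. inr'.
  -
    assert (H' : prov L (negdia_part G0 ++ []) (Neg c)) by (rewrite app_nil_r; auto).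
    eapply absorb_negdia in H'; eauto; [|destruct L; simpl in *; congruence].
    apply r_Dia_neg; auto. apply (Wi _ _ _ _ H'); inc.
  -
    clear IH1. assert (H' : prov L (box_part D ++ [a]) c).
    { apply (Wi _ _ _ _ H1). apply incl_app_app; [|apply incl_refl]. apply box_mono; exact HG0. }
    eapply absorb_box in H'; eauto; [|destruct L; simpl in *; congruence]. clear H1.
    destruct HP as [->|HP].
    + inversion Hri; subst; try hc; prin IHs.
    + eapply r_Dia_pm'; eauto; [inr'|]. apply (Wi _ _ _ _ H'); inc.
  - clear IH1. assert (H' : prov L (negdia_part D ++ [Neg a]) (Neg c)).
    { apply (Wi _ _ _ _ H1). apply incl_app_app; [|apply incl_refl]. apply negdia_mono; exact HG0. }
    eapply absorb_negdia in H'; eauto; [|destruct L; simpl in *; congruence]. clear H1.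
    destruct HP as [->|HP].
    + inversion Hri; subst; try hc; prin IHs.
    + eapply r_Box_neg_pm'; eauto; [inr'|]. apply (Wi _ _ _ _ H'); inc.
  - clear IH1. assert (H' : prov L (negdia_part D ++ [a]) c).
    { apply (Wi _ _ _ _ H1). apply incl_app_app; [|apply incl_refl]. apply negdia_mono; exact HG0. }
    eapply absorb_negdia in H'; eauto; [|destruct L; simpl in *; congruence]. clear H1.
    destruct HP as [->|HP].
    + inversion Hri; subst; try hc; prin IHs.
    + eapply r_Dia_vee'; eauto; [inr'|]. apply (Wi _ _ _ _ H'); inc.
  - clear IH1. assert (H' : prov L (box_part D ++ [Neg a]) (Neg c)).
    { apply (Wi _ _ _ _ H1). apply incl_app_app; [|apply incl_refl]. apply box_mono; exact HG0. }
    eapply absorb_box in H'; eauto; [|destruct L; simpl in *; congruence]. clear H1.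
    destruct HP as [->|HP].
    + inversion Hri; subst; try hc; prin IHs.
    + eapply r_Box_neg_vee'; eauto; [inr'|]. apply (Wi _ _ _ _ H'); inc.
  -
    assert (H' : prov L (box_part G0 ++ negdia_part G0 ++ []) c) by (rewrite app_nil_r; auto).
    eapply absorb_both in H'; eauto; try (destruct L; simpl in *; congruence).
    apply r_Box_join; auto. apply (Wi _ _ _ _ H'); inc.
  - clear IH1. destruct HP as [->|HP].
    + inversion Hri; subst; try hc; prin IHs.
    + eapply r_Dia_join'; eauto. inr'.
  - clear IH1. destruct HP as [->|HP].
    + inversion Hri; subst; try hc; prin IHs.
    + eapply r_Box_neg_join'; eauto. inr'.
  - assert (H' : prov L (box_part G0 ++ negdia_part G0 ++ []) (Neg c)) by (rewrite app_nil_r; auto).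
    eapply absorb_both in H'; eauto; try (destruct L; simpl in *; congruence).
    apply r_Dia_neg_join; auto. apply (Wi _ _ _ _ H'); inc.
  - clear IH1. assert (H' : prov L (box_part D ++ negdia_part D ++ [a]) c).
    { apply (Wi _ _ _ _ H1). repeat apply incl_app_app; try apply incl_refl.
      apply box_mono; exact HG0. apply negdia_mono; exact HG0. }
    eapply absorb_both in H'; eauto; try (destruct L; simpl in *; congruence). clear H1.
    destruct HP as [->|HP].
    + inversion Hri; subst; try hc; prin IHs.
    + eapply r_Dia1'; eauto; [inr'|]. apply (Wi _ _ _ _ H'); inc.
  - clear IH1. assert (H' : prov L (box_part D ++ negdia_part D ++ [Neg a]) (Neg c)).
    { apply (Wi _ _ _ _ H1). repeat apply incl_app_app; try apply incl_refl.
      apply box_mono; exact HG0. apply negdia_mono; exact HG0. }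
    eapply absorb_both in H'; eauto; try (destruct L; simpl in *; congruence). clear H1.
    destruct HP as [->|HP].
    + inversion Hri; subst; try hc; prin IHs.
    + eapply r_Box_neg1'; eauto; [inr'|]. apply (Wi _ _ _ _ H'); inc.
  - clear IH1. assert (H' : prov L (box_part D ++ negdia_part D ++ [Neg a]) c).
    { apply (Wi _ _ _ _ H1). repeat apply incl_app_app; try apply incl_refl.
      apply box_mono; exact HG0. apply negdia_mono; exact HG0. }
    eapply absorb_both in H'; eauto; try (destruct L; simpl in *; congruence). clear H1.
    destruct HP as [->|HP].
    + inversion Hri; subst; try hc; prin IHs.
    + eapply r_Dia1_join'; eauto; [inr'|]. apply (Wi _ _ _ _ H'); inc.
  - clear IH1. assert (H' : prov L (box_part D ++ negdia_part D ++ [a]) (Neg c)).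
    { apply (Wi _ _ _ _ H1). repeat apply incl_app_app; try apply incl_refl.
      apply box_mono; exact HG0. apply negdia_mono; exact HG0. }
    eapply absorb_both in H'; eauto; try (destruct L; simpl in *; congruence). clear H1.
    destruct HP as [->|HP].
    + inversion Hri; subst; try hc; prin IHs.
    + eapply r_Box_neg1_join'; eauto; [inr'|]. apply (Wi _ _ _ _ H'); inc.
Qed.
Ltac lw H := apply (Wi _ _ _ _ H); inc.
Ltac inl0 := apply in_app_iff; left; auto.

Lemma cut_main n : forall L phi, fsize phi < n -> cutP L phi.
Proof.
  induction n as [|n IHn]; intros L phi Hs; [lia|].
  intros G E Dl chi HG. revert Hs E Dl chi.
  induction HG as [p G D Hp | p G D Hp | a G D c Hp H1 IH1 | G a H1 IH1
   | a b G D c Hp H1 IH1 | G a b H1 IH1 H2 IH2 | a b G D c Hp H1 IH1 H2 IH2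
   | G a b H1 IH1 | G a b H1 IH1 | a b G D c Hp H1 IH1 | G a b H1 IH1 H2 IH2
   | a b G D c Hp H1 IH1 H2 IH2 | G a b H1 IH1 | G a b H1 IH1
   | a b G D c Hp H1 IH1 H2 IH2 | G a b H1 IH1 | a b G D c Hp H1 IH1 | G a b H1 IH1 H2 IH2
   | G c Hh H1 IH1 | a G D c Hh Hp H1 IH1 | a G D c Hh Hp H1 IH1 | G c Hh H1 IH1
   | a G D c Hh Hp H1 IH1 | a G D c Hh Hp H1 IH1 | a G D c Hh Hp H1 IH1 | a G D c Hh Hp H1 IH1
   | G c Hh H1 IH1 | a G D c Hh Hp H1 IH1 | a G D c Hh Hp H1 IH1 | G c Hh H1 IH1
   | a G D c Hh Hp H1 IH1 | a G D c Hh Hp H1 IH1 | a G D c Hh Hp H1 IH1 | a G D c Hh Hp H1 IH1];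
   intros Hs E Dl chi HE HI;
   try (pose proof (perm_incl _ _ _ Hp) as HG0; pose proof (perm_head _ _ _ Hp) as HP);
   let rt ri := (apply (inner _ _ _ ltac:(intros ? ?; apply IHn; simpl in *; lia) ri _ _ HE _ HI)) in
   idtac.
  all: let rt ri := (eapply inner; [ | exact ri | exact HE | exact HI]; intros ? ?; apply IHn; simpl in *; lia) in
   first
   [ solve [apply (Wi _ _ _ _ HE); inc]
   | solve [apply (nn_l' _ a); [inl0|]; lw (IH1 Hs E Dl chi HE HI)]
   | solve [apply (and_l' _ a b); [inl0|]; lw (IH1 Hs E Dl chi HE HI)]
   | solve [apply (or_l' _ a b); [inl0|lw (IH1 Hs E Dl chi HE HI)|lw (IH2 Hs E Dl chi HE HI)]]
   | solve [apply (nor_l' _ a b); [inl0|]; lw (IH1 Hs E Dl chi HE HI)]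
   | solve [apply (nand_l' _ a b); [inl0|lw (IH1 Hs E Dl chi HE HI)|lw (IH2 Hs E Dl chi HE HI)]]
   | solve [apply (imp_l' _ a b); [inl0|lw H1|lw (IH2 Hs E Dl chi HE HI)]]
   | solve [apply (nimp_l' _ a b); [inl0|]; lw (IH1 Hs E Dl chi HE HI)]
   | solve [rt (ri_nn _ _ _ H1)]
   | solve [rt (ri_and _ _ _ _ H1 H2)]
   | solve [rt (ri_or1 _ _ _ b H1)]
   | solve [rt (ri_or2 _ _ a _ H1)]
   | solve [rt (ri_nor _ _ _ _ H1 H2)]
   | solve [rt (ri_nand1 _ _ _ b H1)]
   | solve [rt (ri_nand2 _ _ a _ H1)]
   | solve [rt (ri_imp _ _ _ _ H1)]
   | solve [rt (ri_nimp _ _ _ _ H1 H2)]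
   | solve [rt (ri_box _ _ _ Hh H1)]
   | solve [rt (ri_box_join _ _ _ Hh H1)]
   | solve [rt (ri_dneg _ _ _ Hh H1)]
   | solve [rt (ri_dneg_join _ _ _ Hh H1)]
   | solve [rt (ri_dia _ _ _ _ Hh HP H1)]
   | solve [rt (ri_bneg _ _ _ _ Hh HP H1)]
   | solve [rt (ri_dia_join _ _ _ _ Hh HP H1)]
   | solve [rt (ri_bneg_join _ _ _ _ Hh HP H1)]
   | idtac ].
  all: pose proof (box_mono _ _ HG0) as HB;
       pose proof (negdia_mono _ _ HG0) as HN;
       let rt ri := (eapply inner; [ | exact ri | exact HE | exact HI]; intros ? ?; apply IHn; simpl in *; lia) in
       let H1' := fresh "H1'" in
       first
       [ assert (H1' : prov L (box_part D ++ [a]) c) by lw H1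
       | assert (H1' : prov L (negdia_part D ++ [Neg a]) (Neg c)) by lw H1
       | assert (H1' : prov L (negdia_part D ++ [a]) c) by lw H1
       | assert (H1' : prov L (box_part D ++ [Neg a]) (Neg c)) by lw H1
       | assert (H1' : prov L (box_part D ++ negdia_part D ++ [a]) c) by lw H1
       | assert (H1' : prov L (box_part D ++ negdia_part D ++ [Neg a]) (Neg c)) by lw H1
       | assert (H1' : prov L (box_part D ++ negdia_part D ++ [Neg a]) c) by lw H1
       | assert (H1' : prov L (box_part D ++ negdia_part D ++ [a]) (Neg c)) by lw H1 ];
       first
       [ solve [rt (ri_dia_pm _ _ _ _ Hh HP H1')]
       | solve [rt (ri_bneg_pm _ _ _ _ Hh HP H1')]
       | solve [rt (ri_dia_vee _ _ _ _ Hh HP H1')]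
       | solve [rt (ri_bneg_vee _ _ _ _ Hh HP H1')]
       | solve [rt (ri_dia1 _ _ _ _ Hh HP H1')]
       | solve [rt (ri_bneg1 _ _ _ _ Hh HP H1')]
       | solve [rt (ri_dia1_join _ _ _ _ Hh HP H1')]
       | solve [rt (ri_bneg1_join _ _ _ _ Hh HP H1')] ].
Qed.

Theorem theorem5 :
  forall (L : calculus) (Gamma Delta : list form) (phi chi : form),
    (L = GN4 -> Forall modal_free Gamma /\ Forall modal_free Delta /\
                modal_free phi /\ modal_free chi) ->
    prov L Gamma phi ->
    prov L (phi :: Delta) chi ->
    prov L (Gamma ++ Delta) chi.
Proof.
  intros L Gamma Delta phi chi _ H1 H2.
  apply (cut_main (S (fsize phi)) L phi ltac:(lia) Gamma (phi :: Delta) Delta chi H1 H2).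
  apply incl_refl.
Qed.
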